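(* Let $d_1,d_2,d_3\ge2$, $A\in\mathbb{R}^{d_1\times d_2}_{>0}$ and $B\in\mathbb{R}^{d_2\times d_3}_{>0}$ (all entries strictly positive). Then \[ R(AB)\le \Phi\bigl(R(A),R(B)\bigr). \]
   Context: For a matrix $A=(a_{ik})\in\mathbb{R}^{d_1\times d_2}$ with strictly positive entries, its distortion is $R(A)=\max_{1\le i,j\le d_1,\ 1\le k,\ell\le d_2}\frac{a_{ik}a_{j\ell}}{a_{i\ell}a_{jk}}$ (so $R(A)\ge1$). The envelope function is $\Phi(\alpha,\beta)=\left(\frac{1+\sqrt{\alpha\beta}}{\sqrt{\alpha}+\sqrt{\beta}}\right)^2$ for $\alpha,\beta\ge1$. *)

(* Defs.v *)
From mathcomp Require Import all_boot all_order all_algebra.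
Set Implicit Arguments. Unset Strict Implicit. Unset Printing Implicit Defensive.
Import Order.TTheory GRing.Theory Num.Theory.
Local Open Scope ring_scope.

(* All ratios are positive, so seeding the max with 0
   is harmless (the max is attained at some index quadruple). *)
Definition distortion (R : rcfType) (m n : nat) (A : 'M[R]_(m, n)) : R :=
  \big[Num.max/0]_(i < m) \big[Num.max/0]_(j < m)
   \big[Num.max/0]_(k < n) \big[Num.max/0]_(l < n)
     (A i k * A j l / (A i l * A j k)).

Definition Phi (R : rcfType) (a b : R) : R :=
  ((1 + Num.sqrt (a * b)) / (Num.sqrt a + Num.sqrt b)) ^+ 2.

Definition positive_mx (R : rcfType) (m n : nat) (A : 'M[R]_(m, n)) : Prop :=
  forall i j, 0 < A i j.

(* Main.v *)
Require Import Defs.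
From mathcomp Require Import all_boot all_order all_algebra.
From mathcomp Require Import ring lra.
Import Order.TTheory GRing.Theory Num.Theory.
Local Open Scope ring_scope.
Set Implicit Arguments. Unset Strict Implicit.

Lemma core_half (R : rcfType) (a b P Q X : R) :
  1 <= a -> 1 <= b -> 1 <= P -> P <= a^+2 -> 1 <= Q -> Q <= b^+2 ->
  (b^+2-1)*(P-1) <= (a^+2-1)*(Q-1) ->
  X <= b^+2*P + Q - b^+2 ->
  X * (a+b)^+2 <= (1+a*b)^+2 * P * Q.
Proof.
move=> a1 b1 P1 Pa Q1 Qb c hX.
have id : (a^+2-1)*((1+a*b)^+2 * P * Q - (a+b)^+2*(b^+2*P+Q-b^+2)) =
  ((1+a*b)^+2*P - (a+b)^+2) * ((a^+2-1)*(Q-1) - (b^+2-1)*(P-1))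
  + (b^+2-1)*((1+a*b)*P - a*(a+b))^+2 by ring.
have ND : (a+b)^+2 <= (1+a*b)^+2 * P.
  have : (1+a*b)^+2 - (a+b)^+2 = (a^+2-1)*(b^+2-1) by ring.
  have : 0 <= (a^+2-1)*(b^+2-1) by apply: mulr_ge0; nra.
  have : (1+a*b)^+2 <= (1+a*b)^+2 * P.
    rewrite -{1}(mulr1 ((1+a*b)^+2)); apply: ler_wpM2l => //; exact: sqr_ge0.
  lra.
have F : 0 <= (1+a*b)^+2 * P * Q - (a+b)^+2*(b^+2*P+Q-b^+2).
  have : 0 <= (a^+2-1)*((1+a*b)^+2 * P * Q - (a+b)^+2*(b^+2*P+Q-b^+2)).
    rewrite id; apply: addr_ge0; apply: mulr_ge0; try nra.
    exact: sqr_ge0.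
  case: (ltrP 1 a) => ha.
    have ha2 : 0 < a^+2 - 1 by nra.
    by rewrite pmulr_rge0.
  have -> : a = 1 by lra.
  have -> : P = 1 by nra.
  move=> _. rewrite !mul1r !mulr1; lra.
have : X * (a+b)^+2 <= (a+b)^+2*(b^+2*P+Q-b^+2).
  rewrite mulrC; apply: ler_wpM2l => //; exact: sqr_ge0.
lra.
Qed.

Lemma core (R : rcfType) (a b P Q X : R) :
  1 <= a -> 1 <= b -> 1 <= P -> P <= a^+2 -> 1 <= Q -> Q <= b^+2 ->
  X <= b^+2*P + Q - b^+2 -> X <= P + a^+2*Q - a^+2 ->
  X * (a+b)^+2 <= (1+a*b)^+2 * P * Q.
Proof.
move=> a1 b1 P1 Pa Q1 Qb h1 h2.
case: (lerP ((b^+2-1)*(P-1)) ((a^+2-1)*(Q-1))) => c.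
  exact: core_half.
have := @core_half R b a Q P X b1 a1 Q1 Qb P1 Pa (ltW c) ltac:(lra).
have -> : (b+a) = a+b by ring.
have -> : (1+b*a)^+2*Q*P = (1+a*b)^+2*P*Q by ring.
done.
Qed.

Lemma core_hom (R : rcfType) (a b L M S1 Sp Sq Spq : R) :
  1 <= a -> 1 <= b -> 0 < L -> 0 < M -> 0 < S1 ->
  L*S1 <= Sp -> Sp <= a^+2*L*S1 -> M*S1 <= Sq -> Sq <= b^+2*M*S1 ->
  Spq <= b^+2*M*Sp + L*Sq - b^+2*L*M*S1 ->
  Spq <= M*Sp + a^+2*L*Sq - a^+2*L*M*S1 ->
  Spq * S1 * (a+b)^+2 <= (1+a*b)^+2 * Sp * Sq.
Proof.
move=> a1 b1 L0 M0 S0 h1 h2 h3 h4 h5 h6.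
have K1 : 0 < L*S1 by apply: mulr_gt0.
have K2 : 0 < M*S1 by apply: mulr_gt0.
have K3 : 0 < L*M*S1 by apply: mulr_gt0 => //; apply: mulr_gt0.
pose P := Sp/(L*S1). pose Q := Sq/(M*S1). pose X := Spq/(L*M*S1).
have eP : Sp = P*(L*S1) by rewrite /P mulfVK // gt_eqF.
have eQ : Sq = Q*(M*S1) by rewrite /Q mulfVK // gt_eqF.
have eX : Spq = X*(L*M*S1) by rewrite /X mulfVK // gt_eqF.
move: h1 h2 h3 h4 h5 h6; rewrite eP eQ eX => h1 h2 h3 h4 h5 h6.
have P1 : 1 <= P by rewrite -(ler_pM2r K1) mul1r.
have Pa : P <= a^+2 by rewrite -(ler_pM2r K1); move: h2; rewrite !mulrA.
have Q1 : 1 <= Q by rewrite -(ler_pM2r K2) mul1r.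
have Qb : Q <= b^+2 by rewrite -(ler_pM2r K2); move: h4; rewrite !mulrA.
have X1 : X <= b^+2*P + Q - b^+2.
  rewrite -(ler_pM2r K3); move: h5.
  have -> : b^+2*M*(P*(L*S1)) + L*(Q*(M*S1)) - b^+2*L*M*S1 =
    (b^+2*P + Q - b^+2)*(L*M*S1) by ring.
  done.
have X2 : X <= P + a^+2*Q - a^+2.
  rewrite -(ler_pM2r K3); move: h6.
  have -> : M*(P*(L*S1)) + a^+2*L*(Q*(M*S1)) - a^+2*L*M*S1 =
    (P + a^+2*Q - a^+2)*(L*M*S1) by ring.
  done.
have := @core R a b P Q X a1 b1 P1 Pa Q1 Qb X1 X2.
have K4 : 0 < L*M*S1*S1 by apply: mulr_gt0.
rewrite -(ler_pM2r K4).
have -> : X * (L * M * S1) * S1 * (a + b) ^+ 2 = X * (a+b)^+2 * (L*M*S1*S1) by ring.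
have -> : (1 + a * b) ^+ 2 * (P * (L * S1)) * (Q * (M * S1)) = (1 + a * b) ^+ 2 * P * Q * (L*M*S1*S1) by ring.
done.
Qed.

Lemma exmin (R : rcfType) (I : finType) (i0 : I) (f : I -> R) :
  exists m0, forall m, f m0 <= f m.
Proof.
case: (@arg_minP _ R I i0 xpredT f isT) => m _ H.
by exists m => j; apply: H.
Qed.

Lemma bigmax_ub (R : rcfType) (I : finType) (F : I -> R) (x : R) :
  0 <= x -> (forall i, F i <= x) -> \big[Num.max/0]_(i : I) F i <= x.
Proof.
move=> x0 H; apply: (big_ind (fun y => y <= x)) => //.
by move=> u v hu hv; rewrite ge_max hu hv.
Qed.

Lemma bigmax_lb (R : rcfType) (I : finType) (F : I -> R) (i : I) :
  F i <= \big[Num.max/0]_(j : I) F j.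
Proof. by rewrite (bigD1 i) //= le_max lexx. Qed.

Lemma bigmax_lbt (R : rcfType) (I : finType) (F : I -> R) (i : I) x :
  x <= F i -> x <= \big[Num.max/0]_(j : I) F j.
Proof. by move=> h; apply: (le_trans h); apply: bigmax_lb. Qed.

Lemma sum_pos (R : rcfType) (I : finType) (i0 : I) (F : I -> R) :
  (forall i, 0 < F i) -> 0 < \sum_(i : I) F i.
Proof.
move=> H; rewrite (bigD1 i0) //=.
have : 0 <= \sum_(i | i != i0) F i by apply: sumr_ge0 => i _; apply: ltW.
have := H i0; lra.
Qed.

Lemma frac_le (R : rcfType) (t d N D : R) :
  0 < d -> 0 < D -> t * D <= N * d -> t / d <= N / D.
Proof.
move=> d0 D0 h; rewrite ler_pdivrMr // mulrAC ler_pdivlMr //.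
Qed.

Lemma dist_ge (R : rcfType) (m n : nat) (A : 'M[R]_(m, n)) (i j : 'I_m) (k l : 'I_n) :
  A i k * A j l / (A i l * A j k) <= distortion A.
Proof.
rewrite /distortion.
rewrite (bigD1 i) //= le_max; apply/orP; left.
rewrite (bigD1 j) //= le_max; apply/orP; left.
rewrite (bigD1 k) //= le_max; apply/orP; left.
by rewrite (bigD1 l) //= le_max lexx.
Qed.

Lemma dist_ge1 (R : rcfType) (m n : nat) (A : 'M[R]_(m, n)) (i : 'I_m) (k : 'I_n) :
  positive_mx A -> 1 <= distortion A.
Proof.
move=> hA; have := dist_ge A i i k k.
by rewrite divff // gt_eqF // mulr_gt0.
Qed.

Unset Implicit Arguments.

Theorem mainTheorem9 (R : rcfType) (d1 d2 d3 : nat)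
  (hd1 : (2 <= d1)%N) (hd2 : (2 <= d2)%N) (hd3 : (2 <= d3)%N)
  (A : 'M[R]_(d1, d2)) (B : 'M[R]_(d2, d3))
  (hA : positive_mx A) (hB : positive_mx B) :
  distortion (A *m B) <= Phi (distortion A) (distortion B).
Proof.
have i0 : 'I_d1 by exists 0%N; apply: leq_trans hd1.
have k0 : 'I_d2 by exists 0%N; apply: leq_trans hd2.
have l0 : 'I_d3 by exists 0%N; apply: leq_trans hd3.
have al1 := dist_ge1 i0 k0 hA.
have be1 := dist_ge1 k0 l0 hB.
set al := distortion A in al1 *.
set be := distortion B in be1 *.
set a := Num.sqrt al. set b := Num.sqrt be.
have a1 : 1 <= a by rewrite /a -sqrtr1 ler_wsqrtr.
have b1 : 1 <= b by rewrite /b -sqrtr1 ler_wsqrtr.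
have ea : a^+2 = al by rewrite sqr_sqrtr //; lra.
have eb : b^+2 = be by rewrite sqr_sqrtr //; lra.
have D0 : 0 < (a+b)^+2 by apply: exprn_gt0; lra.
have ePhi : Phi al be = (1+a*b)^+2 / (a+b)^+2.
  by rewrite /Phi sqrtrM ?expr_div_n //; lra.
rewrite ePhi.
have Phi0 : 0 <= (1+a*b)^+2 / (a+b)^+2.
  by apply: divr_ge0; [exact: sqr_ge0 | exact: ltW].
rewrite /distortion.
have Hmx : forall u v : R, u <= (1+a*b)^+2/(a+b)^+2 -> v <= (1+a*b)^+2/(a+b)^+2 ->
  Num.max u v <= (1+a*b)^+2/(a+b)^+2 by move=> u v hu hv; rewrite ge_max hu hv.
apply: (big_ind (fun y => y <= (1+a*b)^+2/(a+b)^+2)) => // i _.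
apply: (big_ind (fun y => y <= (1+a*b)^+2/(a+b)^+2)) => // j _.
apply: (big_ind (fun y => y <= (1+a*b)^+2/(a+b)^+2)) => // k _.
apply: (big_ind (fun y => y <= (1+a*b)^+2/(a+b)^+2)) => // l _.
have AB0 : forall u v, 0 < (A *m B) u v.
  move=> u v; rewrite mxE; apply: (sum_pos k0) => m.
  by apply: mulr_gt0.
apply: frac_le => //; first by apply: mulr_gt0.
rewrite !mxE.
have [m0 Hm0] := exmin k0 (fun m => A i m / A j m).
have [n0 Hn0] := exmin k0 (fun m => B m k / B m l).
set L := A i m0 / A j m0.
set M := B n0 k / B n0 l.
have L0 : 0 < L by apply: divr_gt0.
have M0 : 0 < M by apply: divr_gt0.
have f1 : forall m, L * A j m <= A i m.
  move=> m; have := Hm0 m; rewrite -/L ler_pdivlMr //.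
have f2 : forall m, A i m <= al * L * A j m.
  move=> m; have := dist_ge A i j m m0; rewrite -/al ler_pdivrMr; last first.
    by apply: mulr_gt0.
  move=> h.
  have -> : al * L * A j m = al * (A i m0 * A j m) / A j m0.
    by rewrite /L; field; rewrite lt0r_neq0.
  by rewrite ler_pdivlMr.
have g1 : forall m, M * B m l <= B m k.
  move=> m; have := Hn0 m; rewrite -/M ler_pdivlMr //.
have g2 : forall m, B m k <= be * M * B m l.
  move=> m; have := dist_ge B m n0 k l; rewrite -/be ler_pdivrMr; last first.
    by apply: mulr_gt0.
  move=> h.
  have -> : be * M * B m l = be * (B m l * B n0 k) / B n0 l.
    by rewrite /M; field; rewrite lt0r_neq0.
  by rewrite ler_pdivlMr // mulrC.
rewrite mulrA.
set S1 := \sum_(m < d2) A j m * B m l.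
set Sp := \sum_(m < d2) A i m * B m l.
set Sq := \sum_(m < d2) A j m * B m k.
set Spq := \sum_(m < d2) A i m * B m k.
have S10 : 0 < S1 by apply: (sum_pos k0) => m; apply: mulr_gt0.
have h1 : L * S1 <= Sp.
  rewrite /S1 /Sp mulr_sumr; apply: ler_sum => m _.
  by rewrite mulrA ler_wpM2r // ltW.
have h2 : Sp <= al * L * S1.
  rewrite /S1 /Sp mulr_sumr; apply: ler_sum => m _.
  by rewrite mulrA ler_wpM2r // ltW.
have h3 : M * S1 <= Sq.
  rewrite /S1 /Sq mulr_sumr; apply: ler_sum => m _.
  by rewrite mulrCA ler_wpM2l // ltW.
have h4 : Sq <= be * M * S1.
  rewrite /S1 /Sq mulr_sumr; apply: ler_sum => m _.
  by rewrite mulrCA ler_wpM2l // ltW.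
have h5 : Spq <= be * M * Sp + L * Sq - be * L * M * S1.
  rewrite -subr_ge0.
  have -> : be * M * Sp + L * Sq - be * L * M * S1 - Spq =
    \sum_(m < d2) ((A i m - L * A j m) * (be * M * B m l - B m k)).
    rewrite /Sp /Sq /S1 /Spq !mulr_sumr -big_split -!sumrB /=.
    by apply: eq_bigr => m _; ring.
  apply: sumr_ge0 => m _; apply: mulr_ge0; rewrite subr_ge0 //=.
have h6 : Spq <= M * Sp + al * L * Sq - al * L * M * S1.
  rewrite -subr_ge0.
  have -> : M * Sp + al * L * Sq - al * L * M * S1 - Spq =
    \sum_(m < d2) ((al * L * A j m - A i m) * (B m k - M * B m l)).
    rewrite /Sp /Sq /S1 /Spq !mulr_sumr -big_split -!sumrB /=.
    by apply: eq_bigr => m _; ring.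
  apply: sumr_ge0 => m _; apply: mulr_ge0; rewrite subr_ge0 //.
have := @core_hom R a b L M S1 Sp Sq Spq a1 b1 L0 M0 S10.
rewrite ea eb; apply => //.
Qed.
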